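(* Let $\Pi$ be a 2-dimensional real vector space with a fixed nonzero constant area form $\Omega\in\Lambda^2\Pi^*$, and let $\nabla$ be a torsion-free connection with skew-symmetric Ricci tensor on a nonempty connected open set $U\subset\Pi$ which is invariant under the infinitesimal action of $\mathrm{SL}(\Pi)$ (i.e. for every $A\in\mathfrak{sl}(\Pi)$, the vector field $y\mapsto Ay$ on $U$ is an infinitesimal affine transformation of $\nabla$). Then there exists $c\in\mathbb{R}$ such that $\nabla_u v=2c[\Omega(w,u)v+\Omega(w,v)u]-c^2\Omega(w,u)\Omega(w,v)w$ for all vector fields $u$ and all constant vector fields $v$ on $U$, where $w$ denotes the radial (identity) vector field on $\Pi$.
   Context: All objects are $C^\infty$. An infinitesimal affine transformation of a connection is a vector field whose local flows preserve the connection. *)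

(* Defs.v *)
(* Stdlib reals + Coquelicot.  Pi is identified with R*R via a basis. *)
From Stdlib Require Import Reals.
From Coquelicot Require Import Coquelicot.
Open Scope R_scope.

Definition vec := (R * R)%type.

Inductive ix := e1 | e2.

Definition coord (i : ix) (v : vec) : R := match i with e1 => fst v | e2 => snd v end.
Definition basis (i : ix) : vec := match i with e1 => (1, 0) | e2 => (0, 1) end.
Definition mkvec (f : ix -> R) : vec := (f e1, f e2).
Definition sumix (f : ix -> R) : R := f e1 + f e2.

Definition vadd (a b : vec) : vec := (fst a + fst b, snd a + snd b).
Definition vscale (t : R) (a : vec) : vec := (t * fst a, t * snd a).

Definition pd (i : ix) (f : vec -> R) (p : vec) : R :=
  Derive (fun t => f (vadd p (vscale t (basis i)))) 0.

Fixpoint Cn (U : vec -> Prop) (n : nat) (f : vec -> R) : Prop :=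
  (forall p, U p -> continuous f p) /\
  match n with
  | O => True
  | S m => (forall p, U p -> forall i,
              ex_derive (fun t => f (vadd p (vscale t (basis i)))) 0)
           /\ (forall i, Cn U m (pd i f))
  end.

Definition smooth_on (U : vec -> Prop) (f : vec -> R) : Prop := forall n, Cn U n f.

Definition connected_set (U : vec -> Prop) : Prop :=
  forall V W : vec -> Prop, open V -> open W ->
    (forall p, U p -> V p \/ W p) ->
    (forall p, U p -> V p -> W p -> False) ->
    (exists p, U p /\ V p) -> (exists p, U p /\ W p) -> False.

(* A connection on U is given by its Christoffel symbols
   Gam k i j p = Gamma^k_{ij}(p), i.e. nabla_{d_i} d_j = sum_k Gamma^k_{ij} d_k. *)
Definition christoffel := ix -> ix -> ix -> vec -> R.

Definition Gamma (Gam : christoffel) (p u v : vec) : vec :=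
  mkvec (fun k => sumix (fun i => sumix (fun j => Gam k i j p * coord i u * coord j v))).

Definition ddir (v : vec -> vec) (p a : vec) : vec :=
  mkvec (fun k => Derive (fun t => coord k (v (vadd p (vscale t a)))) 0).

Definition nabla (Gam : christoffel) (u v : vec -> vec) (p : vec) : vec :=
  vadd (ddir v p (u p)) (Gamma Gam p (u p) (v p)).

Definition torsion_free (U : vec -> Prop) (Gam : christoffel) : Prop :=
  forall p, U p -> forall k i j, Gam k i j p = Gam k j i p.

(* R(d_i,d_j) d_k = sum_l Rm l i j k d_l,  R(X,Y) = [nabla_X, nabla_Y] - nabla_[X,Y] *)
Definition Rm (Gam : christoffel) (l i j k : ix) (p : vec) : R :=
  pd i (Gam l j k) p - pd j (Gam l i k) p
  + sumix (fun m => Gam l i m p * Gam m j k p - Gam l j m p * Gam m i k p).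

Definition Ric (Gam : christoffel) (j k : ix) (p : vec) : R :=
  sumix (fun i => Rm Gam i i j k p).

Definition ricci_skew (U : vec -> Prop) (Gam : christoffel) : Prop :=
  forall p, U p -> forall j k, Ric Gam j k p = - Ric Gam k j p.

Definition mat := ix -> ix -> R.
Definition mapply (M : mat) (v : vec) : vec :=
  mkvec (fun i => sumix (fun j => M i j * coord j v)).
Definition in_sl2 (A : mat) : Prop := A e1 e1 + A e2 e2 = 0.

(* M t = exp (t A): M 0 = I and M' = A M. The (global) flow of the linear
   vector field y |-> A y is phi_t y = M t y. *)
Definition is_exp_flow (A : mat) (M : R -> mat) : Prop :=
  (forall i j, M 0 i j = if (match i, j with e1, e1 | e2, e2 => true | _, _ => false end)
                         then 1 else 0) /\
  (forall t i j, is_derive (fun s => M s i j) t (sumix (fun m => A i m * M t m j))).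

(* The vector field y |-> A y on U is an infinitesimal affine transformation:
   its local flow on U (phi_t defined at y as long as the trajectory from time 0
   to time t stays in U) preserves nabla.  Since phi_t is linear,
   D phi_t = M t and D^2 phi_t = 0, so phi_t preserves nabla at y iff
   Gamma_{phi_t y}(M t u, M t v) = M t (Gamma_y(u, v)). *)
Definition inf_affine_linear (U : vec -> Prop) (Gam : christoffel) (A : mat) : Prop :=
  forall M, is_exp_flow A M ->
  forall t y, (forall s, Rmin 0 t <= s <= Rmax 0 t -> U (mapply (M s) y)) ->
  forall u v, Gamma Gam (mapply (M t) y) (mapply (M t) u) (mapply (M t) v)
              = mapply (M t) (Gamma Gam y u v).

Definition Omega (lam : R) (a b : vec) : R := lam * (fst a * snd b - snd a * fst b).

(* Main.v *)
Require Import Defs.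
From Stdlib Require Import Reals Lra Psatz Classical.
From Coquelicot Require Import Coquelicot.
Open Scope R_scope.

Definition det (a b : vec) : R := fst a * snd b - snd a * fst b.

Definition Fm (lam a b : R) (p u v : vec) : vec :=
  vadd (vscale a (vadd (vscale (Omega lam p u) v) (vscale (Omega lam p v) u)))
       (vscale (b * Omega lam p u * Omega lam p v) p).

Definition Form (Gam : christoffel) (lam : R) (q : vec) (a b : R) : Prop :=
  forall u v, Gamma Gam q u v = Fm lam a b q u v.

Lemma absR a b : abs (minus a b) = Rabs (a - b).
Proof. reflexivity. Qed.

Lemma vec_ext (a b : vec) : fst a = fst b -> snd a = snd b -> a = b.
Proof. destruct a, b; simpl; intros; subst; reflexivity. Qed.

Definition dc (d : vec) (j : ix) : R := match j with e1 => - snd d | e2 => fst d end.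
Definition shA (d : vec) : mat := fun i j => coord i d * dc d j.
Definition delta (i j : ix) : R := match i, j with e1, e1 | e2, e2 => 1 | _, _ => 0 end.
Definition shM (d : vec) (t : R) : mat := fun i j => delta i j + t * shA d i j.
Definition shear (d : vec) (t : R) (w : vec) : vec := vadd w (vscale (t * det d w) d).

Lemma shA_sl2 d : in_sl2 (shA d).
Proof. unfold in_sl2, shA; simpl; ring. Qed.

Lemma shM_flow d : is_exp_flow (shA d) (shM d).
Proof.
  split.
  - intros i j; destruct i, j; unfold shM, delta; simpl; ring.
  - intros t i j.
    evar (l : R).
    replace (sumix _) with l.
    + unfold shM. auto_derive; [exact I|]. unfold l. reflexivity.
    + unfold l, sumix, shM, shA, delta; destruct i, j; simpl; ring.
Qed.

Lemma shM_apply d t w : mapply (shM d t) w = shear d t w.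
Proof.
  destruct d, w; unfold mapply, shear, shM, shA, delta, mkvec, sumix, vadd, vscale, det, dc; simpl.
  f_equal; ring.
Qed.

Definition rotA : mat := fun i j => match i, j with e1, e2 => -1 | e2, e1 => 1 | _, _ => 0 end.
Definition rotM (t : R) : mat := fun i j =>
  match i, j with e1, e1 => cos t | e1, e2 => - sin t | e2, e1 => sin t | e2, e2 => cos t end.

Lemma rotA_sl2 : in_sl2 rotA.
Proof. unfold in_sl2, rotA; simpl; ring. Qed.

Lemma rotM_flow : is_exp_flow rotA rotM.
Proof.
  split.
  - intros i j; destruct i, j; simpl; rewrite ?cos_0, ?sin_0; ring.
  - intros t i j. destruct i, j; unfold sumix, rotA, rotM; simpl;
    auto_derive; auto; ring.
Qed.

Lemma shear_equiv U Gam :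
  (forall A : mat, in_sl2 A -> inf_affine_linear U Gam A) ->
  forall d t y, (forall s, Rmin 0 t <= s <= Rmax 0 t -> U (shear d s y)) ->
  forall u v, Gamma Gam (shear d t y) (shear d t u) (shear d t v) = shear d t (Gamma Gam y u v).
Proof.
  intros H d t y Hy u v.
  pose proof (H (shA d) (shA_sl2 d) (shM d) (shM_flow d) t y) as H1.
  rewrite <- !shM_apply. apply H1.
  intros s Hs. rewrite shM_apply. apply Hy; auto.
Qed.

Lemma Gamma_zero U Gam :
  (forall A : mat, in_sl2 A -> inf_affine_linear U Gam A) ->
  U (0,0) -> forall u v, Gamma Gam (0,0) u v = (0,0).
Proof.
  intros H H0 u v.
  pose proof (H rotA rotA_sl2 rotM rotM_flow PI (0,0)) as H1.
  assert (E : forall t w, mapply (rotM t) w = (cos t * fst w - sin t * snd w, sin t * fst w + cos t * snd w)).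
  { intros t [w1 w2]; unfold mapply, mkvec, sumix, rotM; simpl. f_equal; ring. }
  assert (H2 : forall s, Rmin 0 PI <= s <= Rmax 0 PI -> U (mapply (rotM s) (0,0))).
  { intros s _. rewrite E. simpl. replace (cos s * 0 - sin s * 0, sin s * 0 + cos s * 0) with (0,0) by (f_equal; ring). exact H0. }
  specialize (H1 H2 u v). rewrite !E in H1. rewrite cos_PI, sin_PI in H1.
  replace (-1 * fst ((0,0):vec) - 0 * snd ((0,0):vec), 0 * fst ((0,0):vec) + -1 * snd ((0,0):vec)) with ((0,0) : vec) in H1 by (simpl; f_equal; ring).

  destruct u as [u1 u2], v as [v1 v2].
  unfold Gamma, mkvec, sumix in *. simpl in *.
  injection H1; intros Hb Ha.
  f_equal; lra.
Qed.

Lemma Fm_shear lam a b d t q u v :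
  shear d t (Fm lam a b q u v) = Fm lam a b (shear d t q) (shear d t u) (shear d t v).
Proof.
  destruct d, q, u, v; unfold shear, Fm, Omega, det, vadd, vscale; simpl; f_equal; ring.
Qed.

Lemma shear_inv d t w : shear d t (shear d (- t) w) = w.
Proof. destruct d, w; unfold shear, det, vadd, vscale; simpl; f_equal; ring. Qed.

Lemma transport U Gam lam a b q q' :
  (forall A : mat, in_sl2 A -> inf_affine_linear U Gam A) ->
  Form Gam lam q a b -> det q q' <> 0 ->
  (forall l, 0 <= l <= 1 -> U (vadd q (vscale l (vadd q' (vscale (-1) q))))) ->
  Form Gam lam q' a b.
Proof.
  intros H HF Hdet Hseg.
  set (d := vadd q' (vscale (-1) q)).
  set (D := det d q).
  assert (HD : D <> 0).
  { unfold D, d, det in *; destruct q, q'; simpl in *. intro; apply Hdet; lra. }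
  set (t := / D).
  assert (Hq' : shear d t q = q').
  { unfold t, shear. fold D. unfold d, vadd, vscale in *. destruct q as [x y], q' as [x' y']; simpl in *.
    unfold D, det in *; simpl in *.
    apply vec_ext; simpl; field; auto. }
  assert (Htraj : forall s, Rmin 0 t <= s <= Rmax 0 t -> U (shear d s q)).
  { intros s Hs. unfold shear. fold D.
    replace (s * D) with (s * D) by reflexivity.
    apply Hseg.
    unfold t in *. unfold Rmin, Rmax in Hs.
    destruct (Rle_dec 0 (/ D)) as [Hp|Hn].
    - assert (0 < D). { destruct (Rlt_le_dec 0 D); auto. exfalso. assert (/ D < 0) by (apply Rinv_lt_0_compat; lra). lra. }
      split; [nra|]. assert (s * D <= / D * D) by nra. rewrite Rinv_l in H1; lra.
    - assert (D < 0). { destruct (Rlt_le_dec D 0); auto. exfalso. apply Hn. left. apply Rinv_0_lt_compat. lra. }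
      split; [nra|]. assert (s * D <= / D * D) by nra. rewrite Rinv_l in H1; lra. }
  intros w z.
  pose proof (shear_equiv U Gam H d t q Htraj (shear d (-t) w) (shear d (-t) z)) as E.
  rewrite !shear_inv, Hq' in E. rewrite E, HF, Fm_shear, !shear_inv, Hq'. reflexivity.
Qed.

Definition Qf (Gam : christoffel) (p : vec) (k : ix) (u v : vec) : R := coord k (Gamma Gam p u v).

Lemma Qf_expand_shear Gam p k q c :
  Gam e1 e2 e1 p = Gam e1 e1 e2 p -> Gam e2 e2 e1 p = Gam e2 e1 e2 p ->
  Qf Gam p k (vadd q (vscale c p)) (vadd q (vscale c p)) =
  Qf Gam p k q q + 2 * c * Qf Gam p k p q + c ^ 2 * Qf Gam p k p p.
Proof.
  intros S1 S2. destruct p, q, k; unfold Qf, Gamma, mkvec, sumix, vadd, vscale; simpl;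
  rewrite ?S1, ?S2; ring.
Qed.

Lemma Qf_expand Gam x y k u v :
  let p := (x, y) in let q := (-y, x) in let N := x^2 + y^2 in
  N <> 0 ->
  Gam e1 e2 e1 p = Gam e1 e1 e2 p -> Gam e2 e2 e1 p = Gam e2 e1 e2 p ->
  Qf Gam p k u v = (det u q * det v q * Qf Gam p k p p
     + (det u q * det p v + det p u * det v q) * Qf Gam p k p q
     + det p u * det p v * Qf Gam p k q q) / N ^ 2.
Proof.
  intros p q N HN S1 S2. unfold p, q, N in *.
  destruct u, v, k; unfold Qf, Gamma, mkvec, sumix, det; simpl;
  rewrite ?S1, ?S2; field; auto.
  all: intro E; apply HN; nra.
Qed.

Lemma pointwise U Gam lam p :
  (forall A : mat, in_sl2 A -> inf_affine_linear U Gam A) ->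
  torsion_free U Gam -> U p -> p <> (0,0) -> lam <> 0 ->
  exists a b, Form Gam lam p a b.
Proof.
  intros H Htf Hp Hnz Hlam.
  destruct p as [x y].
  assert (HN : (x^2+y^2) <> 0).
  { intro E. apply Hnz. assert (x = 0) by nra. assert (y = 0) by nra. subst; reflexivity. }
  assert (S1 := Htf _ Hp e1 e2 e1). assert (S2 := Htf _ Hp e2 e2 e1).
  set (q := (-y, x) : vec).
  assert (Eq : forall t, Gamma Gam (x,y) (shear (x,y) t q) (shear (x,y) t q) = shear (x,y) t (Gamma Gam (x,y) q q)).
  { intro t. pose proof (shear_equiv U Gam H (x,y) t (x,y)) as E.
    assert (Hs : forall s, shear (x,y) s (x,y) = (x,y)).
    { intro s. unfold shear, det, vadd, vscale; simpl; apply vec_ext; simpl; ring. }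
    rewrite Hs in E. apply E. intros s _. rewrite Hs. exact Hp. }
  assert (Hsq : forall t, shear (x,y) t q = vadd q (vscale (t * (x^2+y^2)) (x,y))).
  { intro t. unfold shear, q, det; simpl. f_equal. f_equal. ring. }
  set (G1 := Qf Gam (x,y) e1 q q). set (G2 := Qf Gam (x,y) e2 q q).
  set (D := x * G2 - y * G1).
  assert (Hc : forall k t, Qf Gam (x,y) k q q + 2 * (t * (x^2+y^2)) * Qf Gam (x,y) k (x,y) q + (t*(x^2+y^2))^2 * Qf Gam (x,y) k (x,y) (x,y)
                   = Qf Gam (x,y) k q q + t * D * coord k (x,y)).
  { intros k t. rewrite <- Qf_expand_shear by auto. rewrite <- Hsq. unfold Qf at 1. rewrite Eq.
    unfold D, G1, G2, Qf. destruct k; unfold shear, det, vadd, vscale, coord; simpl; ring. }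
  assert (Hpp : forall k, Qf Gam (x,y) k (x,y) (x,y) = 0).
  { intro k. pose proof (Hc k 1) as A1. pose proof (Hc k (-1)) as A2.
    assert ((x^2+y^2)^2 * Qf Gam (x,y) k (x,y) (x,y) = 0) by nra.
    apply Rmult_integral in H0. destruct H0; auto. exfalso. apply HN. apply (pow_eq_zero_pow _ _ H0) || nra. }
  assert (Hpq : forall k, Qf Gam (x,y) k (x,y) q = D * coord k (x,y) / (2 * (x^2+y^2))).
  { intro k. pose proof (Hc k 1) as A1. pose proof (Hc k (-1)) as A2.
    rewrite Hpp in A1, A2.
    assert (E : 4 * (x^2+y^2) * Qf Gam (x,y) k (x,y) q = 2 * D * coord k (x,y)) by nra.
    apply Rmult_eq_reg_l with (2 * (x^2+y^2)); [|lra].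
    replace (2 * (x^2+y^2) * (D * coord k (x, y) / (2 * (x^2+y^2)))) with (D * coord k (x,y)) by (field; auto). nra. }
  exists (D / (2 * lam * (x^2+y^2)^2)), ((x * G1 + y * G2) / (lam^2 * (x^2+y^2)^3)).
  intros u v.
  assert (K : forall k, coord k (Gamma Gam (x,y) u v) = coord k (Fm lam (D / (2 * lam * (x^2+y^2)^2)) ((x * G1 + y * G2) / (lam^2 * (x^2+y^2)^3)) (x,y) u v)).
  { intro k. change (coord k (Gamma Gam (x,y) u v)) with (Qf Gam (x,y) k u v).
    rewrite Qf_expand by auto. fold q.  rewrite Hpp, Hpq.
    unfold D. destruct k; [fold G1 | fold G2]; destruct u, v; unfold Fm, Omega, det, vadd, vscale, q; simpl.
    all: field; repeat split; auto.
    all: intro E; apply HN; nra. }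
  apply vec_ext; [apply (K e1) | apply (K e2)].
Qed.

Definition sq (c : vec) (e : R) (r : vec) : Prop :=
  fst c - e < fst r < fst c + e /\ snd c - e < snd r < snd c + e.

Lemma open_sq (U : vec -> Prop) q : open U -> U q -> exists e, e > 0 /\ forall r, sq q e r -> U r.
Proof.
  intros H Hq. destruct (H q Hq) as [e He]. exists e. split; [apply cond_pos|].
  intros r [H1 H2]. apply He. change (Rabs (fst r - fst q) < e /\ Rabs (snd r - snd q) < e). split; apply Rabs_def1; lra.
Qed.

Lemma conv1 lo hi x y l : lo < x < hi -> lo < y < hi -> 0 <= l <= 1 ->
  lo < x + l * (y + -1 * x) < hi.
Proof.
  intros [A B] [C D] [L M].
  destruct (Rle_lt_dec x y).
  - assert (0 <= l * (y - x)) by (apply Rmult_le_pos; lra).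
    assert (l * (y - x) <= 1 * (y - x)) by (apply Rmult_le_compat_r; lra). lra.
  - assert (0 <= l * (x - y)) by (apply Rmult_le_pos; lra).
    assert (l * (x - y) <= 1 * (x - y)) by (apply Rmult_le_compat_r; lra). lra.
Qed.

Lemma sq_convex c e r r' l : sq c e r -> sq c e r' -> 0 <= l <= 1 ->
  sq c e (vadd r (vscale l (vadd r' (vscale (-1) r)))).
Proof.
  destruct r as [r1 r2], r' as [s1 s2]; unfold sq, vadd, vscale; simpl.
  intros [[A1 A2] [A3 A4]] [[B1 B2] [B3 B4]] [L1 L2].
  split; apply conv1; split; auto.
Qed.

Lemma nz_comp (r : vec) : r <> (0,0) -> fst r <> 0 \/ snd r <> 0.
Proof.
  destruct r as [x y]; simpl; intro H.
  destruct (Req_dec x 0); destruct (Req_dec y 0); auto. subst; tauto.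
Qed.

Lemma local_const U Gam lam a b c e :
  (forall A : mat, in_sl2 A -> inf_affine_linear U Gam A) ->
  e > 0 -> (forall r, sq c e r -> U r) ->
  forall r r', sq c e r -> sq c e r' -> r <> (0,0) -> r' <> (0,0) ->
  Form Gam lam r a b -> Form Gam lam r' a b.
Proof.
  intros H He HU r r' Hr Hr' Hnz Hnz' HF.
  assert (Tr : forall s s', sq c e s -> sq c e s' -> det s s' <> 0 -> Form Gam lam s a b -> Form Gam lam s' a b).
  { intros s s' Hs Hs' Hd HFs. apply (transport U Gam lam a b s s' H HFs Hd).
    intros l Hl. apply HU. apply sq_convex; auto. }
  destruct (Req_dec (det r r') 0) as [D0|D0]; [|apply (Tr r r'); auto].
  assert (Hm : exists m, sq c e m /\ det r m <> 0).
  { destruct (Req_dec (det r c) 0) as [Dc|Dc].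
    - destruct (nz_comp r Hnz) as [N1|N2].
      + exists (fst c, snd c + e/2). split.
        * unfold sq; simpl; split; split; lra.
        * destruct r as [r1 r2], c as [c1 c2]; unfold det in *; simpl in *.
          intro E. assert (r1 * (e/2) = 0) by nra. apply Rmult_integral in H0. destruct H0; lra.
      + exists (fst c + e/2, snd c). split.
        * unfold sq; simpl; split; split; lra.
        * destruct r as [r1 r2], c as [c1 c2]; unfold det in *; simpl in *.
          intro E. assert (r2 * (e/2) = 0) by nra. apply Rmult_integral in H0. destruct H0; lra.
    - exists c. split; auto. unfold sq; split; split; lra. }
  destruct Hm as [m [Hm Hdm]].
  assert (Hdm' : det m r' <> 0).
  { intro E. apply Hnz'. destruct r as [r1 r2], m as [m1 m2], r' as [s1 s2]; unfold det in *; simpl in *.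
    assert (X1 : (r1 * m2 - r2 * m1) * s1 = - (m1 * s2 - m2 * s1) * r1 + (r1 * s2 - r2 * s1) * m1) by ring.
    assert (X2 : (r1 * m2 - r2 * m1) * s2 = - (m1 * s2 - m2 * s1) * r2 + (r1 * s2 - r2 * s1) * m2) by ring.
    rewrite E, D0 in X1, X2. 
    assert (Y1 : (r1 * m2 - r2 * m1) * s1 = 0) by (rewrite X1; ring).
    assert (Y2 : (r1 * m2 - r2 * m1) * s2 = 0) by (rewrite X2; ring). clear X1 X2. rename Y1 into X1, Y2 into X2.
    apply Rmult_integral in X1; apply Rmult_integral in X2.
    destruct X1, X2; try contradiction; subst; reflexivity. }
  apply (Tr m r'); auto. apply (Tr r m); auto.
Qed.

Lemma sq_center q e : e > 0 -> sq q e q.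
Proof. intro; unfold sq; split; split; lra. Qed.

Lemma nzpt q e : e > 0 -> exists r, sq q e r /\ r <> (0,0).
Proof.
  intro He. destruct (classic (q = (0,0))) as [E|E].
  - exists (e/2, 0). subst. unfold sq; simpl. split; [split; split; lra|].
    intro X. injection X. lra.
  - exists q. split; auto. apply sq_center; auto.
Qed.

Lemma sq_mono q e e' r : e' <= e -> sq q e' r -> sq q e r.
Proof. unfold sq; intros; lra. Qed.

Lemma global U Gam lam a0 b0 p0 :
  (forall A : mat, in_sl2 A -> inf_affine_linear U Gam A) ->
  open U -> connected_set U -> U p0 -> Form Gam lam p0 a0 b0 -> p0 <> (0,0) ->
  forall q, U q -> q <> (0,0) -> Form Gam lam q a0 b0.
Proof.
  intros H HU Hc Hp0 HF0 Hnz0.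
  set (V := fun q => exists e, e > 0 /\ (forall r, sq q e r -> U r) /\
                      forall r, sq q e r -> r <> (0,0) -> Form Gam lam r a0 b0).
  set (W := fun q => exists e, e > 0 /\ (forall r, sq q e r -> U r) /\
                      forall r, sq q e r -> r <> (0,0) -> ~ Form Gam lam r a0 b0).
  assert (Hopen : forall P : vec -> R -> Prop,
     (forall q e e' r, e' <= e -> P q e -> sq q e' r -> P r (e - e')) ->
     open (fun q => exists e, e > 0 /\ P q e)).
  { intros P HP q [e [He Hq]].
    exists (mkposreal (e/2) ltac:(lra)). intros y Hy.
    change (Rabs (fst y - fst q) < e/2 /\ Rabs (snd y - snd q) < e/2) in Hy.
    exists (e - e/2). split; [lra|]. apply (HP q e (e/2) y). lra. exact Hq.
    destruct Hy as [Y1 Y2]. apply Rabs_def2 in Y1; apply Rabs_def2 in Y2.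
    destruct Y1, Y2. destruct y as [y1 y2], q as [q1 q2]; unfold sq; simpl in *. split; split; lra. }
  assert (Hsub : forall q e e' r s, sq q e' r -> sq r (e - e') s -> sq q e s).
  { intros q e e' r s. unfold sq. intros; lra. }
  assert (HoV : open V).
  { apply (Hopen (fun q e => (forall r, sq q e r -> U r) /\
                      forall r, sq q e r -> r <> (0,0) -> Form Gam lam r a0 b0)).
    intros q e e' r Hle [A B] Hr. split; intros s Hs; [apply A | apply B]; eauto. }
  assert (HoW : open W).
  { apply (Hopen (fun q e => (forall r, sq q e r -> U r) /\
                      forall r, sq q e r -> r <> (0,0) -> ~ Form Gam lam r a0 b0)).
    intros q e e' r Hle [A B] Hr. split; intros s Hs; [apply A | apply B]; eauto. }
  assert (Hcov : forall q, U q -> V q \/ W q).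
  { intros q Hq. destruct (open_sq U q HU Hq) as [e [He HUe]].
    destruct (nzpt q e He) as [r0 [Hr0 Hnzr0]].
    destruct (classic (Form Gam lam r0 a0 b0)) as [F|F].
    - left. exists e. repeat split; auto. intros r Hr Hnz.
      apply (local_const U Gam lam a0 b0 q e H He HUe r0 r); auto.
    - right. exists e. repeat split; auto. intros r Hr Hnz Fr. apply F.
      apply (local_const U Gam lam a0 b0 q e H He HUe r r0); auto. }
  assert (Hdisj : forall q, U q -> V q -> W q -> False).
  { intros q _ [e1 [E1 [_ F1]]] [e2 [E2 [_ F2]]].
    destruct (nzpt q (Rmin e1 e2)) as [r [Hr Hnz]]. { apply Rmin_glb_lt; auto. }
    apply (F2 r); [apply (sq_mono q e2 (Rmin e1 e2)); auto; apply Rmin_r|auto|].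
    apply F1; auto. apply (sq_mono q e1 (Rmin e1 e2)); auto; apply Rmin_l. }
  assert (HV0 : V p0).
  { destruct (open_sq U p0 HU Hp0) as [e [He HUe]].
    exists e. repeat split; auto. intros r Hr Hnz.
    apply (local_const U Gam lam a0 b0 p0 e H He HUe p0 r); auto. apply sq_center; auto. }
  intros q Hq Hnz.
  destruct (Hcov q Hq) as [[e [He [_ F]]] | Wq].
  - apply F; auto. apply sq_center; auto.
  - exfalso. apply (Hc V W HoV HoW Hcov Hdisj); eauto.
Qed.

Definition Gf (lam a b : R) (l j k : ix) (r : vec) : R :=
  a * (Omega lam r (basis j) * coord l (basis k) + Omega lam r (basis k) * coord l (basis j))
  + b * (Omega lam r (basis j) * Omega lam r (basis k) * coord l r).

Definition dGf (lam a b : R) (l j k i : ix) (p : vec) : R :=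
  a * (Omega lam (basis i) (basis j) * coord l (basis k) + Omega lam (basis i) (basis k) * coord l (basis j))
  + b * (Omega lam (basis i) (basis j) * Omega lam p (basis k) * coord l p
         + Omega lam p (basis j) * Omega lam (basis i) (basis k) * coord l p
         + Omega lam p (basis j) * Omega lam p (basis k) * coord l (basis i)).

Lemma ric_formula Gam p lam a b :
  (forall l j k, Gam l j k p = Gf lam a b l j k p) ->
  (forall i l j k, pd i (Gam l j k) p = dGf lam a b l j k i p) ->
  forall j, Ric Gam j j p = (4 * b + a^2) * (Omega lam p (basis j))^2.
Proof.
  intros HG HD j. unfold Ric, Rm, sumix. rewrite !HD, !HG.
  destruct p as [x y]; destruct j; unfold Gf, dGf, Omega; simpl; ring.
Qed.

Lemma deriv_poly a b A0 A1 B0 B1 C D E0 E1 :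
  Derive (fun t => a * ((A0 + t * A1) * C + (B0 + t * B1) * D)
                   + b * ((A0 + t * A1) * (B0 + t * B1) * (E0 + t * E1))) 0
  = a * (A1 * C + B1 * D) + b * (A1 * B0 * E0 + A0 * B1 * E0 + A0 * B0 * E1).
Proof.
  apply is_derive_unique. auto_derive; [exact I|]. ring.
Qed.

Lemma pd_Gf lam a b l j k i p :
  Derive (fun t => Gf lam a b l j k (vadd p (vscale t (basis i)))) 0 = dGf lam a b l j k i p.
Proof.
  rewrite (Derive_ext _ (fun t => a * ((Omega lam p (basis j) + t * Omega lam (basis i) (basis j)) * coord l (basis k)
                     + (Omega lam p (basis k) + t * Omega lam (basis i) (basis k)) * coord l (basis j))
                   + b * ((Omega lam p (basis j) + t * Omega lam (basis i) (basis j))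
                         * (Omega lam p (basis k) + t * Omega lam (basis i) (basis k))
                         * (coord l p + t * coord l (basis i))))).
  - rewrite deriv_poly. unfold dGf. ring.
  - intro t. unfold Gf, Omega, vadd, vscale. destruct l; simpl; ring.
Qed.

Lemma Gam_Gf Gam lam a b r : Form Gam lam r a b -> forall l j k, Gam l j k r = Gf lam a b l j k r.
Proof.
  intros HF l j k.
  assert (E : Gam l j k r = coord l (Gamma Gam r (basis j) (basis k))).
  { destruct l, j, k; unfold Gamma, mkvec, sumix; simpl; ring. }
  rewrite E, HF. unfold Gf, Fm. destruct l; simpl; ring.
Qed.

Lemma pd_Gam Gam lam a b p i d :
  d > 0 -> (forall t, Rabs t < d -> Form Gam lam (vadd p (vscale t (basis i))) a b) ->
  forall l j k, pd i (Gam l j k) p = dGf lam a b l j k i p.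
Proof.
  intros Hd HF l j k. unfold pd. rewrite <- pd_Gf.
  apply Derive_ext_loc. exists (mkposreal d Hd). intros t Ht.
  change (Rabs (t - 0) < d) in Ht. rewrite Rminus_0_r in Ht.
  apply Gam_Gf, HF; auto.
Qed.

Theorem lemma10p7 (lam : R) (U : vec -> Prop) (Gam : christoffel) :
  lam <> 0 ->
  open U -> (exists p, U p) -> connected_set U ->
  (forall k i j, smooth_on U (Gam k i j)) ->
  torsion_free U Gam ->
  ricci_skew U Gam ->
  (forall A : mat, in_sl2 A -> inf_affine_linear U Gam A) ->
  exists c : R,
    forall u : vec -> vec, (forall k, smooth_on U (fun p => coord k (u p))) ->
    forall (v0 : vec) (p : vec), U p ->
      nabla Gam u (fun _ => v0) p =
      vadd (vscale (2 * c) (vadd (vscale (Omega lam p (u p)) v0)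
                                 (vscale (Omega lam p v0) (u p))))
           (vscale (- c ^ 2 * Omega lam p (u p) * Omega lam p v0) p).
Proof.
  intros Hlam HU [p1 Hp1] Hc _ Htf Hric H.
  destruct (open_sq U p1 HU Hp1) as [eps1 [He1 HUe1]].
  destruct (nzpt p1 eps1 He1) as [p0 [Hp0s Hnz0]].
  assert (Hp0 : U p0) by auto.
  destruct (pointwise U Gam lam p0 H Htf Hp0 Hnz0 Hlam) as [a0 [b0 HF0]].
  pose proof (global U Gam lam a0 b0 p0 H HU Hc Hp0 HF0 Hnz0) as Hglob.
  destruct (open_sq U p0 HU Hp0) as [e [He HUe]].
  destruct p0 as [x0 y0].
  set (m := Rmax (Rabs x0) (Rabs y0)).
  assert (Hm : m > 0).
  { destruct (nz_comp _ Hnz0) as [N|N]; simpl in N.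
    - apply Rlt_le_trans with (Rabs x0); [apply Rabs_pos_lt; auto | apply Rmax_l].
    - apply Rlt_le_trans with (Rabs y0); [apply Rabs_pos_lt; auto | apply Rmax_r]. }
  set (d := Rmin e m).
  assert (Hd : d > 0) by (apply Rmin_glb_lt; auto).
  assert (Hloc : forall i t, Rabs t < d -> Form Gam lam (vadd (x0,y0) (vscale t (basis i))) a0 b0).
  { intros i t Ht. assert (Hte : Rabs t < e) by (apply Rlt_le_trans with d; auto; apply Rmin_l).
    assert (Htm : Rabs t < m) by (apply Rlt_le_trans with d; auto; apply Rmin_r).
    apply Rabs_def2 in Hte. destruct Hte.
    apply Hglob.
    - apply HUe. destruct i; unfold sq, vadd, vscale; simpl; split; split; lra.
    - intro Z. destruct i; unfold vadd, vscale in Z; simpl in Z; injection Z; intros Z2 Z1.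
      + assert (y0 = 0) by lra. assert (x0 = -t) by lra. subst.
        unfold m in Htm. rewrite Rabs_R0, Rabs_Ropp in Htm.
        rewrite Rmax_left in Htm by apply Rabs_pos. lra.
      + assert (x0 = 0) by lra. assert (y0 = -t) by lra. subst.
        unfold m in Htm. rewrite Rabs_R0, Rabs_Ropp in Htm.
        rewrite Rmax_right in Htm by apply Rabs_pos. lra. }
  assert (HR : forall j, Ric Gam j j (x0,y0) = (4 * b0 + a0^2) * (Omega lam (x0,y0) (basis j))^2).
  { apply ric_formula.
    - apply Gam_Gf; auto.
    - intro i. apply (pd_Gam Gam lam a0 b0 (x0,y0) i d Hd (Hloc i)). }
  assert (Hb : 4 * b0 + a0^2 = 0).
  { assert (Z : forall j, (4 * b0 + a0^2) * (Omega lam (x0,y0) (basis j))^2 = 0).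
    { intro j. rewrite <- HR. pose proof (Hric _ Hp0 j j). lra. }
    destruct (nz_comp _ Hnz0) as [N|N]; simpl in N.
    - specialize (Z e2). unfold Omega in Z; simpl in Z.
      apply Rmult_integral in Z. destruct Z as [Z|Z]; auto.
      exfalso. assert (Z' : forall w, w ^ 2 = 0 -> w = 0) by (intros w Hw; destruct (Req_dec w 0); auto; exfalso; apply (pow_nonzero w 2); auto). apply Z' in Z. assert (H0 : lam * x0 = 0) by (rewrite <- Z; ring).
      apply Rmult_integral in H0. destruct H0; [auto|lra].
    - specialize (Z e1). unfold Omega in Z; simpl in Z.
      apply Rmult_integral in Z. destruct Z as [Z|Z]; auto.
      exfalso. assert (Z' : forall w, w ^ 2 = 0 -> w = 0) by (intros w Hw; destruct (Req_dec w 0); auto; exfalso; apply (pow_nonzero w 2); auto). apply Z' in Z. assert (H0 : lam * y0 = 0) by (replace (lam * y0) with (- (lam * (x0 * 0 - y0 * 1))) by ring; rewrite Z; ring).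
      apply Rmult_integral in H0. destruct H0; [auto|lra]. }
  exists (a0 / 2).
  intros u _ v0 p Hp.
  unfold nabla.
  assert (Hdd : ddir (fun _ => v0) p (u p) = (0,0)).
  { unfold ddir, mkvec. rewrite !Derive_const. reflexivity. }
  rewrite Hdd.
  destruct (classic (p = (0,0))) as [Z|Z].
  - subst p. rewrite (Gamma_zero U Gam H Hp).
    unfold vadd, vscale, Omega; simpl. f_equal; ring.
  - rewrite (Hglob p Hp Z (u p) v0). unfold Fm.
    assert (Eb : b0 = - (a0/2)^2) by nra. rewrite Eb.
    destruct (u p) as [w1 w2]; destruct p, v0; unfold vadd, vscale, Omega; simpl. f_equal; field.
Qed.
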